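(* If $q$ is an odd prime power and $\mathcal{S}$ is a $(q+2)$-element subset of $\mathbb{P}^2(\mathbb{F}_q)$, then there are at most two points $P\in\mathcal{S}$ with the property that no line through $P$ contains more than two points of $\mathcal{S}$. *)

(* Defs.v *)
From mathcomp Require Import all_boot all_order all_algebra all_field.
Set Implicit Arguments. Unset Strict Implicit. Unset Printing Implicit Defensive.
Import GRing.Theory.
Local Open Scope ring_scope.

(* Points of P^2(F): nonzero row vectors in F^3, normalized so that the first
   nonzero coordinate equals 1 (one canonical representative per point). *)
Definition normalized (F : fieldType) (v : 'rV[F]_3) : bool :=
  [exists i : 'I_3, (v 0 i == 1) && [forall j : 'I_3, (j < i)%N ==> (v 0 j == 0)]].

Definition PG2 (F : finFieldType) : {set 'rV[F]_3} := [set v | normalized v].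

(* Lines of P^2(F) are given by nonzero coordinate vectors l;
   the point P lies on the line l iff P . l = 0. *)
Definition incident (F : fieldType) (P l : 'rV[F]_3) : bool :=
  \sum_(i < 3) P 0 i * l 0 i == 0.

Definition line_pts (F : finFieldType) (S : {set 'rV[F]_3}) (l : 'rV[F]_3)
  : {set 'rV[F]_3} := [set X in S | incident X l].

Definition no_long_line (F : finFieldType) (S : {set 'rV[F]_3}) (P : 'rV[F]_3)
  : bool :=
  [forall l : 'rV[F]_3, ((l != 0) && incident P l) ==> (#|line_pts S l| <= 2)%N].

(* Main.v *)
Require Import Defs.
From mathcomp Require Import all_boot all_order all_algebra all_field all_fingroup all_solvable.
From mathcomp Require Import ring zify.
Set Implicit Arguments. Unset Strict Implicit. Unset Printing Implicit Defensive.
Import GRing.Theory.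
Local Open Scope ring_scope.

Section Geo.
Variable F : fieldType.
Definition i0 : 'I_3 := @Ordinal 3 0 isT.
Definition i1 : 'I_3 := @Ordinal 3 1 isT.
Definition i2 : 'I_3 := @Ordinal 3 2 isT.

Lemma ord3P (j : 'I_3) : [\/ j = i0, j = i1 | j = i2].
Proof.
case: j => [[|[|[|m]]] Hm]; first (by constructor 1; apply: val_inj);
  first (by constructor 2; apply: val_inj); first (by constructor 3; apply: val_inj).
by [].
Qed.

Lemma sum3 (f : 'I_3 -> F) : \sum_(i < 3) f i = f i0 + f i1 + f i2.
Proof.
rewrite !big_ord_recl big_ord0 addr0 addrA; congr (_ + _ + _); apply: congr1; exact: val_inj.
Qed.

Lemma row3_eq (u v : 'rV[F]_3) :
  u 0 i0 = v 0 i0 -> u 0 i1 = v 0 i1 -> u 0 i2 = v 0 i2 -> u = v.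
Proof.
move=> h0 h1 h2; apply/rowP => j; case: (ord3P j) => ->; by [].
Qed.

Definition tp (u v w : 'rV[F]_3) : F :=
  u 0 i0 * (v 0 i1 * w 0 i2 - v 0 i2 * w 0 i1)
+ u 0 i1 * (v 0 i2 * w 0 i0 - v 0 i0 * w 0 i2)
+ u 0 i2 * (v 0 i0 * w 0 i1 - v 0 i1 * w 0 i0).

Definition cross (u v : 'rV[F]_3) : 'rV[F]_3 :=
  \row_(j < 3) (if j == i0 then u 0 i1 * v 0 i2 - u 0 i2 * v 0 i1
               else if j == i1 then u 0 i2 * v 0 i0 - u 0 i0 * v 0 i2
               else u 0 i0 * v 0 i1 - u 0 i1 * v 0 i0).

Lemma incident_cross u v w : incident w (cross u v) = (tp u v w == 0).
Proof.
rewrite /incident sum3 !mxE /=. apply/eqP/eqP => <-; rewrite /tp; ring.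
Qed.

Lemma tp_cyc u v w : tp u v w = tp w u v.
Proof. rewrite /tp; ring. Qed.
Lemma tp_swap u v w : tp u v w = - tp v u w.
Proof. rewrite /tp; ring. Qed.
Lemma tp_uuv u v : tp u u v = 0.
Proof. rewrite /tp; ring. Qed.
Lemma tp_uvv u v : tp u v v = 0.
Proof. rewrite /tp; ring. Qed.

Lemma plucker1 A B C X Y :
  tp A X C * tp A B Y - tp A Y C * tp A B X = tp A B C * tp A X Y.
Proof. rewrite /tp; ring. Qed.
Lemma plucker2 A B C X Y :
  tp A B X * tp Y B C - tp A B Y * tp X B C = tp A B C * tp B X Y.
Proof. rewrite /tp; ring. Qed.
Lemma plucker3 A B C X Y :
  tp X B C * tp A Y C - tp Y B C * tp A X C = tp A B C * tp C X Y.
Proof. rewrite /tp; ring. Qed.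

Lemma normalized_cases (v : 'rV[F]_3) : normalized v ->
  [\/ v 0 i0 = 1, v 0 i0 = 0 /\ v 0 i1 = 1 | [/\ v 0 i0 = 0, v 0 i1 = 0 & v 0 i2 = 1]].
Proof.
case/existsP => i /andP [/eqP Hi /forallP Hj].
have H0 : (0 < i)%N -> v 0 i0 = 0 by move=> h; apply/eqP; exact: (implyP (Hj i0)).
have H1 : (1 < i)%N -> v 0 i1 = 0 by move=> h; apply/eqP; exact: (implyP (Hj i1)).
case: (ord3P i) Hi H0 H1 => -> Hi H0 H1; [constructor 1 | constructor 2 | constructor 3] => //.
  by split => //; apply: H0.
by split => //; [apply: H0 | apply: H1].
Qed.

Lemma cross_neq0 u v : normalized u -> normalized v -> u != v -> cross u v != 0.
Proof.
move=> Nu Nv; apply: contraNneq => Hc.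
have e0 : u 0 i1 * v 0 i2 - u 0 i2 * v 0 i1 = 0 by have := congr1 (fun M : 'rV[F]_3 => M 0 i0) Hc; rewrite !mxE.
have e1 : u 0 i2 * v 0 i0 - u 0 i0 * v 0 i2 = 0 by have := congr1 (fun M : 'rV[F]_3 => M 0 i1) Hc; rewrite !mxE.
have e2 : u 0 i0 * v 0 i1 - u 0 i1 * v 0 i0 = 0 by have := congr1 (fun M : 'rV[F]_3 => M 0 i2) Hc; rewrite !mxE.
apply/eqP.
case: (normalized_cases Nu) => [a0|[a0 a1]|[a0 a1 a2]];
case: (normalized_cases Nv) => [b0|[b0 b1]|[b0 b1 b2]];
rewrite ?a0 ?a1 ?a2 ?b0 ?b1 ?b2 in e0 e1 e2.
all: rewrite ?mul1r ?mulr1 ?mul0r ?mulr0 ?subr0 ?sub0r ?oppr_eq0 in e0 e1 e2.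
all: first [ have e0' := subr0_eq e0 | move/eqP: e0; rewrite ?oppr_eq0 => /eqP e0' ].
all: first [ have e1' := subr0_eq e1 | move/eqP: e1; rewrite ?oppr_eq0 => /eqP e1' ].
all: first [ have e2' := subr0_eq e2 | move/eqP: e2; rewrite ?oppr_eq0 => /eqP e2' ].
all: apply: row3_eq; rewrite ?a0 ?a1 ?a2 ?b0 ?b1 ?b2 ?e0' ?e1' ?e2' //.
all: try solve [exfalso; have := oner_neq0 F; rewrite ?e0' ?e1' ?e2' ?eqxx //].
Qed.
End Geo.

Lemma two_neq0 (F : finFieldType) : odd #|F| -> (2 : F) != 0.
Proof.
move=> Hodd; apply/negP => H2.
have Hp : (2%N \in [pchar F]) by rewrite inE /= H2.
have := abelem_pgroup (fin_ring_pchar_abelem Hp).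
rewrite /pgroup cardsT => /p_natP [k Hk].
move: Hodd; rewrite Hk oddX /=.
case: k Hk => [|k] // Hk _.
by have := finNzRing_gt1 F; rewrite Hk.
Qed.

Lemma wilson (F : finFieldType) : odd #|F| -> \prod_(x in [set~ (0:F)]) x = -1.
Proof.
move=> Hodd; have H := finField_genPoly F.
rewrite (bigD1 0) //= subr0 in H.
have q1 : (0 < #|F|.-1)%N by rewrite -ltnS prednK ?finNzRing_gt1 // ltnW // finNzRing_gt1.
have : 'X^(#|F|.-1) - 1 = \prod_(x | x != 0) ('X - x%:P) :> {poly F}.
  have nX : ('X : {poly F}) != 0 by rewrite polyX_eq0.
  apply: (mulfI nX); rewrite -H mulrBr mulr1 -exprS prednK //.
  exact: ltnW (finNzRing_gt1 F).
move/(congr1 (horner^~ 0)); rewrite horner_prod !hornerE expr0n /= eqn0Ngt q1 /= sub0r.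
rewrite (eq_bigr (fun i => - i)); last by move=> i _; rewrite !hornerE.
rewrite prodrN.
have -> : \prod_(x in [set~ (0:F)]) x = \prod_(x | x != 0) x.
  by apply: eq_bigl => x; rewrite !inE.
have -> : #|[pred x : F | x != 0]| = #|F|.-1.
  by rewrite -(cardsC1 (0:F)); apply: eq_card => x; rewrite !inE.
rewrite -signr_odd.
have -> : odd #|F|.-1 = false.
  by move: Hodd q1; case: #|F| => [|n] //= ; case: (odd n).
by rewrite expr0 mul1r => ->.
Qed.

Section Main.
Variable F : finFieldType.
Variable S : {set 'rV[F]_3}.
Hypothesis HS : S \subset PG2 F.

Lemma normS X : X \in S -> normalized X.
Proof. by move=> hX; have := subsetP HS X hX; rewrite inE. Qed.

Lemma collinear_false P X Y : P \in S -> no_long_line S P -> X \in S -> Y \in S ->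
  P != X -> X != Y -> Y != P -> tp P X Y = 0 -> False.
Proof.
move=> hP gP hX hY dPX dXY dYP ht.
have lnz := cross_neq0 (normS hP) (normS hX) dPX.
have iP : incident P (cross P X) by rewrite incident_cross tp_cyc tp_uuv.
move/forallP: gP => /(_ (cross P X)); rewrite lnz iP /= => Hle.
have : (2 < #|line_pts S (cross P X)|)%N.
  apply/card_gt2P; exists P, X, Y; split; last by split.
  by rewrite !inE hP hX hY !incident_cross tp_cyc !tp_uuv tp_uvv ht eqxx.
by rewrite ltnNge Hle.
Qed.

Lemma prod_perm (T : finType) (A : {set T}) (f : T -> F) :
  {in A &, injective f} -> (forall x, x \in A -> f x != 0) -> #|A| = #|F|.-1 ->
  \prod_(x in A) f x = \prod_(y in [set~ (0:F)]) y.
Proof.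
move=> inj nz HA.
have Him : f @: A = [set~ 0].
  apply/eqP; rewrite eqEcard; apply/andP; split.
    by apply/subsetP => y /imsetP [x hx ->]; rewrite !inE nz.
  by rewrite card_in_imset // cardsC1 HA.
by rewrite -Him big_imset.
Qed.

End Main.

Theorem proposition1p3 (F : finFieldType) (S : {set 'rV[F]_3}) :
  odd #|F| ->
  S \subset PG2 F ->
  #|S| = (#|F| + 2)%N ->
  (#|[set P in S | no_long_line S P]| <= 2)%N.
Proof.
move=> Hodd HS HcS; rewrite leqNgt; apply/negP.
case/card_gt2P => P1 [P2 [P3 [[h1 h2 h3] [d12 d23 d31]]]].
move: h1 h2 h3; rewrite !inE => /andP [s1 g1] /andP [s2 g2] /andP [s3 g3].
pose S' := S :\ P1 :\ P2 :\ P3.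
have cS' : #|S'| = #|F|.-1.
  move: HcS; rewrite (cardsD1 P1 S) (cardsD1 P2 (S :\ P1)) (cardsD1 P3 (S :\ P1 :\ P2)).
  rewrite !inE s1 s2 s3 (eq_sym P2) d12 (eq_sym P3 P2) d23 d31 /= -/S'. lia.
have inS' X : X \in S' -> [/\ X \in S, X != P1, X != P2 & X != P3].
  by rewrite !inE => /and4P [-> -> -> ->].
have cf := collinear_false HS.
pose D := tp P1 P2 P3.
have Dnz : D != 0 by apply/eqP; apply: (cf P1 P2 P3).
pose a X := tp X P2 P3. pose b X := tp P1 X P3. pose c X := tp P1 P2 X.
have anz X : X \in S' -> a X != 0.
  case/inS' => hX x1 x2 x3; apply/eqP => e.
  by apply: (cf P2 P3 X) => //; [rewrite eq_sym | rewrite tp_cyc].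
have bnz X : X \in S' -> b X != 0.
  case/inS' => hX x1 x2 x3; apply/eqP => e.
  by apply: (cf P3 P1 X) => //; [rewrite eq_sym | rewrite tp_cyc tp_cyc].
have cnz X : X \in S' -> c X != 0.
  case/inS' => hX x1 x2 x3; apply/eqP => e.
  by apply: (cf P1 P2 X) => //; rewrite eq_sym.
have W1 : \prod_(X in S') (b X / c X) = \prod_(y in [set~ (0:F)]) y.
  apply: prod_perm => //; last by move=> X hX; rewrite mulf_neq0 ?invr_eq0 ?bnz ?cnz.
  move=> X Y hX hY /eqP; rewrite eqr_div ?cnz // => /eqP e.
  apply/eqP; apply: contraT => dXY; exfalso.
  have : D * tp P1 X Y = 0 by rewrite -plucker1 -/(b X) -/(b Y) -/(c X) -/(c Y) e subrr.
  move/eqP; rewrite mulf_eq0 (negbTE Dnz) /= => /eqP.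
  case/inS': hX => hX x1 _ _; case/inS': hY => hY y1 _ _.
  by apply: cf => //; rewrite eq_sym.
have W2 : \prod_(X in S') (c X / a X) = \prod_(y in [set~ (0:F)]) y.
  apply: prod_perm => //; last by move=> X hX; rewrite mulf_neq0 ?invr_eq0 ?anz ?cnz.
  move=> X Y hX hY /eqP; rewrite eqr_div ?anz // => /eqP e.
  apply/eqP; apply: contraT => dXY; exfalso.
  have : D * tp P2 X Y = 0 by rewrite -plucker2 -/(a X) -/(a Y) -/(c X) -/(c Y) e subrr.
  move/eqP; rewrite mulf_eq0 (negbTE Dnz) /= => /eqP.
  case/inS': hX => hX _ x2 _; case/inS': hY => hY _ y2 _.
  by apply: cf => //; rewrite eq_sym.
have W3 : \prod_(X in S') (a X / b X) = \prod_(y in [set~ (0:F)]) y.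
  apply: prod_perm => //; last by move=> X hX; rewrite mulf_neq0 ?invr_eq0 ?anz ?bnz.
  move=> X Y hX hY /eqP; rewrite eqr_div ?bnz // => /eqP e.
  apply/eqP; apply: contraT => dXY; exfalso.
  have : D * tp P3 X Y = 0 by rewrite -plucker3 -/(a X) -/(a Y) -/(b X) -/(b Y) e subrr.
  move/eqP; rewrite mulf_eq0 (negbTE Dnz) /= => /eqP.
  case/inS': hX => hX _ _ x3; case/inS': hY => hY _ _ y3.
  by apply: cf => //; rewrite eq_sym.
have H1 : (\prod_(X in S') (b X / c X)) * (\prod_(X in S') (c X / a X)) * (\prod_(X in S') (a X / b X)) = 1.
  rewrite -!big_split /= big1 // => X hX.
  have := anz X hX; have := bnz X hX; have := cnz X hX.
  move=> hc hb ha; field; rewrite ?ha ?hb ?hc //.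
rewrite W1 W2 W3 wilson // in H1.
apply/negP: (two_neq0 Hodd); apply/negPn/eqP.
have -> : (2:F) = 1 - (-1 * -1 * -1) by ring.
by rewrite H1 subrr.
Qed.
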